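(* For all integers $s,t\ge 1$ there exists an $H(2^{t+1},\,s2^t,\,2^{t+1}-1,\,2^{t+1}-2)$ design.
   Context: For an integer $q\ge1$, $Q_q=\{0,1,\dots,q-1\}$ and $Q_{q*}=Q_q\cup\{*\}$. The weight of a word $u\in Q_{q*}^n$ is $n$ minus the number of $*$ symbols in $u$. For $u,v\in Q_{q*}^n$ we say $u$ extends $v$ if $u_i=v_i$ for every position $i$ with $v_i\neq *$. For integers $n\ge w\ge t\ge1$, $q\ge1$, an $H(n,q,w,t)$ design is a set $S$ of words of weight $w$ in $Q_{q*}^n$ such that every word of weight $t$ in $Q_{q*}^n$ is extended by exactly one element of $S$. *)

(* Defs.v *)
From mathcomp Require Import all_boot.
Set Implicit Arguments. Unset Strict Implicit. Unset Printing Implicit Defensive.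

(* A word of length n over Q_{q*} = Q_q ∪ {*}: position i holds [Some a]
   with a ∈ Q_q = 'I_q, or [None] for the symbol *. *)
Definition word (n q : nat) := {ffun 'I_n -> option 'I_q}.

Definition weight (n q : nat) (u : word n q) : nat :=
  #|[set i : 'I_n | u i != None]|.

Definition extends (n q : nat) (u v : word n q) : bool :=
  [forall i : 'I_n, (v i != None) ==> (u i == v i)].

Definition H_design (n q w t : nat) (S : {set word n q}) : Prop :=
  [/\ [&& t <= w, w <= n, 1 <= t & 1 <= q],
      (forall u, u \in S -> weight u = w) &
      (forall v : word n q, weight v = t ->
         #|[set u in S | extends u v]| = 1)].
Arguments H_design : clear implicits.

(* Main.v *)
Require Import Defs.
From mathcomp Require Import all_boot all_algebra all_field.
Import GRing.Theory.
Set Implicit Arguments. Unset Strict Implicit. Unset Printing Implicit Defensive.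

Section Core.
Local Open Scope ring_scope.
Variables (F : fieldType) (n q : nat) (G : zmodType).
Hypothesis F2 : 2%N \in [pchar F].
Variable e : 'I_n -> F.
Hypothesis e_inj : injective e.
Variable K : pred F.
Hypothesis K0 : 0 \in K.
Hypothesis KD : forall a b, a \in K -> b \in K -> a + b \in K.
Hypothesis K2 : forall a b, a \notin K -> b \notin K -> a + b \in K.
Variable c : F.
Hypothesis cK : c \notin K.
Variables (dec : 'I_q -> F * G) (enc : F -> G -> 'I_q).
Hypothesis decK : forall y, (dec y).1 \in K.
Hypothesis encK : forall a g, a \in K -> dec (enc a g) = (a, g).
Hypothesis decE : forall y, enc (dec y).1 (dec y).2 = y.

Lemma oppF (x : F) : - x = x.
Proof. by apply/eqP; rewrite eq_sym -addr_eq0 addrr_pchar2. Qed.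

Definition v1 (o : option 'I_q) : F := if o is Some y then (dec y).1 else 0.
Definition v2 (o : option 'I_q) : G := if o is Some y then (dec y).2 else 0.
Definition inS (i : 'I_n) (u : word n q) : bool :=
  [&& u i == None, [forall k, (k != i) ==> (u k != None)],
      \sum_k (e i + e k) * v1 (u k) == c * e i & \sum_k v2 (u k) == 0].
Definition S : {set word n q} := [set u | [exists i, inS i u]].

Lemma S_weight u : u \in S -> weight u = (n - 1)%N.
Proof.
rewrite inE => /existsP[i /and4P[/eqP ui /forallP hk _ _]].
rewrite /weight; have -> : [set k | u k != None] = [set~ i].
  apply/setP => k; rewrite !inE; case: (eqVneq k i) => [->|ne].
    by rewrite ui.
  by have := hk k; rewrite ne.
by rewrite cardsC1 card_ord subn1.
Qed.

Definition fill (v : word n q) (b : 'I_n) (y : 'I_q) : word n q :=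
  [ffun k => if k == b then Some y else v k].

Lemma sum_fill1 (v : word n q) b y (f : 'I_n -> F) : v b = None ->
  \sum_k f k * v1 (fill v b y k) = f b * (dec y).1 + \sum_k f k * v1 (v k).
Proof.
move=> vb; rewrite (bigD1 b) //= [in RHS](bigD1 b) //= ffunE eqxx vb /=.
rewrite mulr0 add0r; congr (_ + _); apply: eq_bigr => k /negbTE kb.
by rewrite ffunE kb.
Qed.

Lemma sum_fill2 (v : word n q) b y : v b = None ->
  \sum_k v2 (fill v b y k) = (dec y).2 + \sum_k v2 (v k).
Proof.
move=> vb; rewrite (bigD1 b) //= [in RHS](bigD1 b) //= ffunE eqxx vb /=.
rewrite add0r; congr (_ + _); apply: eq_bigr => k /negbTE kb.
by rewrite ffunE kb.
Qed.

Lemma sumK (v : word n q) : \sum_k v1 (v k) \in K.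
Proof.
apply: (big_ind (fun x => x \in K)) => //.
by move=> k _; case: (v k) => [y|] //=.
Qed.

Section Pair.
Variables (v : word n q) (a b : 'I_n).
Hypothesis ab : a != b.
Hypothesis hv : forall k, (v k == None) = (k == a) || (k == b).

Definition Rs (i : 'I_n) := \sum_k (e i + e k) * v1 (v k).
Definition xs (i j : 'I_n) := (c * e i - Rs i) / (e i + e j).
Definition rr := \sum_k v2 (v k).

Lemma nz : e a + e b != 0.
Proof.
rewrite addr_eq0 oppF; apply: contra ab => /eqP h; apply/eqP; exact: e_inj.
Qed.

Lemma fill_S y : (fill v b y \in S) = ((dec y).1 == xs a b) && ((dec y).2 == - rr).
Proof.
have va : v a = None by apply/eqP; rewrite hv eqxx.
have vb : v b = None by apply/eqP; rewrite hv eqxx orbT.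
have ba : (b == a) = false by rewrite eq_sym; apply/negbTE.
rewrite inE; apply/existsP/idP.
  case=> i /and4P[/eqP hi _ h1 h2].
  have ia : i = a.
    move: hi; rewrite ffunE; case: (eqVneq i b) => // ib /eqP.
    by rewrite hv (negbTE ib) orbF => /eqP.
  subst i; rewrite sum_fill1 // in h1; rewrite sum_fill2 // in h2.
  rewrite addr_eq0 in h2; rewrite h2 andbT; apply/eqP.
  rewrite /xs -(eqP h1) addrK [_ * (dec y).1]mulrC mulfK //; exact: nz.
case/andP=> /eqP h1 /eqP h2; exists a; apply/and4P; split.
- by rewrite ffunE (negbTE ab) va.
- apply/forallP => k; apply/implyP => ka; rewrite ffunE.
  case: (eqVneq k b) => // kb; by rewrite hv (negbTE ka) (negbTE kb).
- rewrite sum_fill1 // h1 /xs mulrC divfK; last exact: nz.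
  by rewrite subrK.
- by rewrite sum_fill2 // h2 addNr.
Qed.

Lemma fill_ext y : extends (fill v b y) v.
Proof.
apply/forallP => k; apply/implyP => hk; rewrite ffunE.
case: (eqVneq k b) => [kb|_ //]; by move: hk; rewrite kb hv eqxx orbT.
Qed.

End Pair.

Lemma xs_sum (v : word n q) a b : a != b ->
  xs v a b + xs v b a = c - \sum_k v1 (v k).
Proof.
move=> ab; have hz := nz ab.
have eab : e b + e a = e a + e b by rewrite addrC.
apply: (mulIf hz); rewrite /xs eab mulrDl !divfK // mulrBl.
rewrite addrACA -opprD /Rs -big_split /= -mulrDr; congr (_ - _).
rewrite mulr_suml; apply: eq_bigr => k _; rewrite -mulrDl mulrC; congr (_ * _).
by rewrite addrACA addrr_pchar2 // addr0.
Qed.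

Lemma S_unique (v : word n q) : (2 <= n)%N -> weight v = (n - 2)%N ->
  #|[set u in S | extends u v]| = 1%N.
Proof.
move=> n2 wv.
have : #|[set k | v k == None]| == 2%N.
  have := cardsC [set k | v k == None]; rewrite card_ord.
  have -> : ~: [set k | v k == None] = [set k | v k != None].
    by apply/setP => k; rewrite !inE.
  rewrite -/(weight v) wv => h.
  by rewrite -(eqn_add2r (n - 2)) h addnC subnK.
case/cards2P => i [j [ij hA]].
have hv : forall k, (v k == None) = (k == i) || (k == j).
  by move=> k; move/setP: hA => /(_ k); rewrite !inE.
have hv' : forall k, (v k == None) = (k == j) || (k == i).
  by move=> k; rewrite orbC.
have ji : j != i by rewrite eq_sym.
have hsum := xs_sum v ij.
have xor : (xs v i j \in K) = (xs v j i \notin K).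
  have nK : xs v i j + xs v j i \notin K.
    rewrite hsum; apply: contra cK => h.
    have := KD h (sumK v); by rewrite subrK.
  case hi: (xs v i j \in K); case hj: (xs v j i \in K) => //=.
    by move: nK; rewrite KD.
  by move: nK; rewrite K2 ?hi ?hj.
pose u0 := if xs v i j \in K then fill v j (enc (xs v i j) (- rr v))
           else fill v i (enc (xs v j i) (- rr v)).
apply/eqP/cards1P; exists u0; apply/setP => u; rewrite !inE.
apply/andP/eqP.
  case=> uS uext; have uS2 : u \in S by rewrite inE.
  have := uS => /existsP[a /and4P[/eqP ua /forallP hk _ _]].
  have va : v a == None.
    apply: contraT => hn; move/forallP: uext => /(_ a); rewrite hn /= ua.
    by move/eqP => h; move: hn; rewrite -h.
  have key : forall b, a != b -> (forall k, (v k == None) = (k == a) || (k == b)) ->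
      exists y, u = fill v b y /\ (dec y).1 = xs v a b /\ (dec y).2 = - rr v.
    move=> b ab hvab; have := hk b; rewrite eq_sym ab /=.
    case ub: (u b) => [y|] // _; exists y.
    have uf : u = fill v b y.
      apply/ffunP => k; rewrite ffunE; case: (eqVneq k b) => [->//|kb].
      case: (eqVneq k a) => [->|ka]; first by rewrite ua; apply/esym/eqP; rewrite hvab eqxx.
      have vk : v k != None by rewrite hvab (negbTE ka) (negbTE kb).
      by move/forallP: uext => /(_ k); rewrite vk => /eqP.
    split => //; move: uS2; rewrite uf (fill_S ab hvab) => /andP[/eqP -> /eqP ->].
    by [].
  move: va; rewrite hv => /orP[] /eqP ai; subst a.
    have [y [-> [h1 h2]]] := key j ij hv.
    have xK : xs v i j \in K by rewrite -h1.
    by rewrite /u0 xK -h1 -h2 decE.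
  have [y [-> [h1 h2]]] := key i ji hv'.
  have xK : xs v i j \notin K by rewrite xor -h1 decK.
  by rewrite /u0 (negbTE xK) -h1 -h2 decE.
move=> ->; rewrite /u0; case hx: (xs v i j \in K).
  split; last exact: fill_ext.
  by have := fill_S ij hv (enc (xs v i j) (- rr v)); rewrite inE => ->; rewrite encK //= !eqxx.
split; last exact: fill_ext.
have xK : xs v j i \in K by move: hx; rewrite xor => /negbFE.
by have := fill_S ji hv' (enc (xs v j i) (- rr v)); rewrite inE => ->; rewrite encK //= !eqxx.
Qed.

End Core.

Section Field2.
Local Open Scope ring_scope.
Variable F : finFieldType.
Hypothesis F2 : 2%N \in [pchar F].

Definition ff (x : F) := x ^+ 2 + x.
Definition Kset : {set F} := ff @: [set: F].

Lemma ffD x y : ff (x + y) = ff x + ff y.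
Proof.
rewrite /ff sqrrD -mulr_natr (GRing.pcharf0 F2) mulr0 addr0.
by rewrite addrACA.
Qed.

Lemma ff_eq x y : (ff y == ff x) = (y == x) || (y == x + 1).
Proof.
have -> : (ff y == ff x) = (ff (y - x) == 0).
  by rewrite ffD (oppF F2 x) addr_eq0 (oppF F2).
rewrite /ff expr2 -{3}[y - x]mulr1 -mulrDr mulf_eq0 subr_eq0.
congr (_ || _).
by rewrite -[1 in LHS](oppF F2) -addrA -opprD subr_eq0.
Qed.

Lemma K0 : 0 \in Kset.
Proof. by apply/imsetP; exists 0; rewrite // /ff expr2 mulr0 addr0. Qed.

Lemma KD a b : a \in Kset -> b \in Kset -> a + b \in Kset.
Proof.
by case/imsetP => x _ -> /imsetP[y _ ->]; apply/imsetP; exists (x + y); rewrite ?ffD.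
Qed.

Lemma cardK : #|F| = (2 * #|Kset|)%N.
Proof.
rewrite -cardsT -sum1_card (partition_big_imset ff) /= -/Kset.
rewrite mulnC -sum_nat_const; apply: eq_bigr => _ /imsetP[x0 _ ->].
rewrite (eq_bigl (fun x => x \in [set x0; x0 + 1])).
  rewrite sum1_card cards2.
  suff -> : (x0 != x0 + 1) by [].
  by rewrite eq_sym -subr_eq0 addrC addKr oner_eq0.
by move=> x; rewrite !inE ff_eq.
Qed.

Lemma cardKC : #|~: Kset| = #|Kset|.
Proof.
have := cardsC Kset; rewrite cardK => h.
by apply/eqP; rewrite -(eqn_add2l #|Kset|) h mul2n addnn.
Qed.

Lemma K2 a b : a \notin Kset -> b \notin Kset -> a + b \in Kset.
Proof.
move=> aK bK.
have sub : (fun k => k + a) @: Kset \subset ~: Kset.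
  apply/subsetP => y /imsetP[k kK ->]; rewrite inE; apply: contra aK => h.
  by have := KD h kK; rewrite addrAC addrr_pchar2 // add0r.
have ceq : #|(fun k => k + a) @: Kset| = #|~: Kset|.
  by rewrite card_imset ?cardKC //; apply: addIr.
have := (subset_cardP ceq sub) b; rewrite inE bK => /imsetP[k kK ->].
by rewrite addrC -addrA addrr_pchar2 // addr0.
Qed.

Lemma exc : exists c, c \notin Kset.
Proof.
have : ~: Kset != set0.
  rewrite -card_gt0 cardKC card_gt0; apply/set0Pn; exists 0; exact: K0.
by case/set0Pn => c; rewrite inE; exists c.
Qed.

End Field2.
Unset Implicit Arguments.

Theorem corollary2 (s t : nat) (hs : 1 <= s) (ht : 1 <= t) :
  exists S : {set word (2 ^ t.+1) (s * 2 ^ t)},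
    H_design (2 ^ t.+1) (s * 2 ^ t) (2 ^ t.+1 - 1) (2 ^ t.+1 - 2) S.
Proof.
have [F F2 cardF] := @pPrimePowerField 2 t.+1 isT (ltn0Sn t).
case: s hs => [//|s'] _.
set N := 2 ^ t.+1; set q := s'.+1 * 2 ^ t.
have cK : #|Kset F| = 2 ^ t.
  by apply/eqP; rewrite -(eqn_pmul2l (isT : 0 < 2)) -(cardK F2) cardF expnS.
pose T := ({x : F | x \in Kset F} * 'I_s'.+1)%type.
have hq : #|{: T}| = q.
  rewrite card_prod card_sig card_ord.
  have -> : #|[pred x in Kset F]| = #|Kset F| by apply: eq_card.
  by rewrite cK mulnC.
pose k0 : {x : F | x \in Kset F} := exist _ 0%R (K0 F).
pose dec (y : 'I_q) : F * 'I_s'.+1 :=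
  let p := enum_val (cast_ord (esym hq) y) in (val p.1, p.2).
pose enc (a : F) (g : 'I_s'.+1) : 'I_q := cast_ord hq (enum_rank (insubd k0 a, g)).
pose e (k : 'I_N) : F := enum_val (cast_ord (esym cardF) k).
have e_inj : injective e by move=> x y /enum_val_inj /cast_ord_inj.
have [c cn] := exc F2.
have N4 : 4 <= N by rewrite /N (@leq_exp2l 2 2).
exists (S e c dec); split.
- apply/and4P; split.
  + by rewrite leq_sub2l.
  + exact: leq_subr.
  + by rewrite subn_gt0 (leq_trans _ N4).
  + by rewrite muln_gt0 expn_gt0.
- move=> u; exact: S_weight.
- move=> v wv; apply: (S_unique F2 e_inj (K0 F) (KD F2) (K2 F2) cn (enc := enc)) => //.
  + by move=> y; rewrite /dec /=; case: (enum_val _) => [[a ha] g].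
  + move=> a g ha; rewrite /dec /enc cast_ordK enum_rankK /= insubdK //.
  + move=> y; rewrite /dec /enc /= valKd.
    by rewrite -surjective_pairing enum_valK cast_ordKV.
exact: leq_trans _ N4.
Qed.
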